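(* Let $\Phi:(\mathcal{S},g)\to(\mathcal{M},\bar g)$ be an isometric immersion of an $n$-dimensional orientable Riemannian manifold into a semi-Riemannian manifold with co-dimension $k$. For every $p\in\mathcal{S}$, the umbilical space and the shear space at $p$ satisfy $$\mathscr{U}_p=(\mathrm{Im}\,\widetilde h_p)^\perp\quad\text{and}\quad k-\dim\mathscr{U}_p=\dim\mathrm{Im}\,\widetilde h_p,$$ where $(\mathrm{Im}\,\widetilde h_p)^\perp=\{\eta_p\in T_p\mathcal{S}^\perp:\bar g(\eta_p,\xi_p)=0\ \forall\xi_p\in\mathrm{Im}\,\widetilde h_p\}$.
   Context: $g=\Phi^\star\bar g$ is positive definite. The second fundamental form $h$ is the normal part of $\overline\nabla_XY$; the shape operator $A_\xi$ of a normal vector $\xi$ satisfies $g(A_\xi X,Y)=\bar g(h(X,Y),\xi)$; $H=\frac1n\mathrm{tr}_g h$ is the mean curvature vector. The total shear tensor is $\widetilde h(X,Y)=h(X,Y)-g(X,Y)H$. The shear space at $p$ is $\mathrm{Im}\,\widetilde h_p=\mathrm{span}\{\widetilde h(v,w):v,w\in T_p\mathcal{S}\}\subseteq T_p\mathcal{S}^\perp$. The umbilical space at $p$ is $\mathscr{U}_p=\{\xi_p\in T_p\mathcal{S}^\perp: A_{\xi_p}\text{ is proportional to the identity}\}$. *)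

(* Defs.v *)
(* Pointwise (linear-algebraic) model of the data at a point p:
   T_pS = 'rV[R]_n with metric g given by a positive definite symmetric matrix G,
   T_pS^perp = 'rV[R]_k with the restriction of gbar given by a nondegenerate
   symmetric matrix B (arbitrary signature), and the second fundamental form
   h_p : T_pS x T_pS -> T_pS^perp a symmetric bilinear map. *)
From HB Require Import structures.
From mathcomp Require Import all_boot all_order all_algebra.
Set Implicit Arguments. Unset Strict Implicit. Unset Printing Implicit Defensive.
Import Order.TTheory GRing.Theory Num.Theory.
Local Open Scope ring_scope.

Section Defs.
Variables (R : realFieldType) (n k : nat).

Definition bform {m : nat} (M : 'M[R]_m) (x y : 'rV[R]_m) : R := (x *m M *m y^T) 0 0.

Definition pos_def_sym {m : nat} (M : 'M[R]_m) : Prop :=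
  M^T = M /\ forall x : 'rV[R]_m, x != 0 -> 0 < bform M x x.

Definition nondeg_sym {m : nat} (M : 'M[R]_m) : Prop :=
  M^T = M /\ M \in unitmx.

Definition sym_bilinear (h : 'rV[R]_n -> 'rV[R]_n -> 'rV[R]_k) : Prop :=
  (forall a x y z, h (a *: x + y) z = a *: h x z + h y z) /\
  (forall x y, h x y = h y x).

Definition ebase (i : 'I_n) : 'rV[R]_n := delta_mx 0 i.

Definition mean_curv (G : 'M[R]_n) (h : 'rV[R]_n -> 'rV[R]_n -> 'rV[R]_k) : 'rV[R]_k :=
  n%:R^-1 *: \sum_(i < n) \sum_(j < n) (invmx G i j) *: h (ebase i) (ebase j).

Definition shear (G : 'M[R]_n) (h : 'rV[R]_n -> 'rV[R]_n -> 'rV[R]_k)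
  (x y : 'rV[R]_n) : 'rV[R]_k :=
  h x y - bform G x y *: mean_curv G h.

(* shape operator A_xi (row-vector convention, acting as X |-> X *m A_xi),
   characterised by g(A_xi X, Y) = gbar(h(X,Y), xi) *)
Definition shape_op (G : 'M[R]_n) (B : 'M[R]_k)
  (h : 'rV[R]_n -> 'rV[R]_n -> 'rV[R]_k) (xi : 'rV[R]_k) : 'M[R]_n :=
  (\matrix_(i, j) bform B (h (ebase i) (ebase j)) xi) *m invmx G.

Definition umbilical (G : 'M[R]_n) (B : 'M[R]_k)
  (h : 'rV[R]_n -> 'rV[R]_n -> 'rV[R]_k) (xi : 'rV[R]_k) : Prop :=
  exists c : R, shape_op G B h xi = c%:M.

Definition in_shear_space (G : 'M[R]_n)
  (h : 'rV[R]_n -> 'rV[R]_n -> 'rV[R]_k) (xi : 'rV[R]_k) : Prop :=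
  exists (m : nat) (c : 'I_m -> R) (v w : 'I_m -> 'rV[R]_n),
    xi = \sum_(l < m) c l *: shear G h (v l) (w l).

Definition represents (U : 'M[R]_k) (P : 'rV[R]_k -> Prop) : Prop :=
  forall x : 'rV[R]_k, (x <= U)%MS <-> P x.

End Defs.

(* Main.v *)
Require Import Defs.
From HB Require Import structures.
From mathcomp Require Import all_boot all_order all_algebra.
Set Implicit Arguments. Unset Strict Implicit. Unset Printing Implicit Defensive.
Import Order.TTheory GRing.Theory Num.Theory.
Local Open Scope ring_scope.

Section Helpers.
Variable R : realFieldType.

Lemma bformE m (M : 'M[R]_m) x y : bform M x y = (x *m (M *m y^T)) 0 0.
Proof. by rewrite /bform mulmxA. Qed.

Lemma bform_suml m (M : 'M[R]_m) I (r : seq I) P (F : I -> 'rV_m) y :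
  bform M (\sum_(i <- r | P i) F i) y = \sum_(i <- r | P i) bform M (F i) y.
Proof. by rewrite bformE mulmx_suml summxE; apply: eq_bigr => i _; rewrite bformE. Qed.

Lemma bform_scalel m (M : 'M[R]_m) a x y : bform M (a *: x) y = a * bform M x y.
Proof. by rewrite !bformE -scalemxAl mxE. Qed.

Lemma bform_addl m (M : 'M[R]_m) x x' y : bform M (x + x') y = bform M x y + bform M x' y.
Proof. by rewrite !bformE mulmxDl mxE. Qed.

Lemma bform_sym m (M : 'M[R]_m) x y : M^T = M -> bform M x y = bform M y x.
Proof.
move=> HM; rewrite /bform.
have -> : (x *m M *m y^T) 0 0 = ((x *m M *m y^T)^T) 0 0 by rewrite [in RHS]mxE.
by rewrite !trmx_mul trmxK HM mulmxA.
Qed.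

Lemma bform_scaleM m (M : 'M[R]_m) c x y : bform (c *: M) x y = c * bform M x y.
Proof. by rewrite /bform -scalemxAr -scalemxAl mxE. Qed.

Lemma bform_e m (M : 'M[R]_m) i j : bform M (delta_mx 0 i) (delta_mx 0 j) = M i j.
Proof.
rewrite /bform trmx_delta.
by rewrite -rowE -colE !mxE.
Qed.
Lemma bform_tr m (M : 'M[R]_m) x y : bform M x y = bform M^T y x.
Proof.
rewrite /bform.
have -> : (x *m M *m y^T) 0 0 = ((x *m M *m y^T)^T) 0 0 by rewrite [in RHS]mxE.
by rewrite !trmx_mul trmxK mulmxA.
Qed.

Lemma bform_sumr m (M : 'M[R]_m) I (r : seq I) P (F : I -> 'rV_m) x :
  bform M x (\sum_(i <- r | P i) F i) = \sum_(i <- r | P i) bform M x (F i).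
Proof. by rewrite bform_tr bform_suml; apply: eq_bigr => i _; rewrite -bform_tr. Qed.

Lemma bform_scaler m (M : 'M[R]_m) a x y : bform M x (a *: y) = a * bform M x y.
Proof. by rewrite bform_tr bform_scalel -bform_tr. Qed.

Lemma bform_addr m (M : 'M[R]_m) x y y' : bform M x (y + y') = bform M x y + bform M x y'.
Proof. by rewrite bform_tr bform_addl -!bform_tr. Qed.

Lemma expand_vec (V : lmodType R) m (F : 'rV[R]_m -> V) :
  (forall a x y, F (a *: x + y) = a *: F x + F y) ->
  forall v, F v = \sum_i v 0 i *: F (delta_mx 0 i).
Proof.
move=> HF.
have F0 : F 0 = 0.
  have := HF 1 0 0; rewrite scaler0 addr0 scale1r.
  by rewrite -{1}[F 0]addr0 => /addrI <-.
have FD : {morph F : x y / x + y}.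
  move=> x y; have := HF 1 x y; rewrite !scale1r. done.
have FZ : forall a x, F (a *: x) = a *: F x.
  by move=> a x; rewrite -[a *: x]addr0 HF F0 addr0.
move=> v; rewrite {1}(row_sum_delta v) (big_morph F FD F0).
by apply: eq_bigr => i _; rewrite FZ.
Qed.
End Helpers.
Lemma split_l m n (i : 'I_m) : split (lshift n i) = inl i.
Proof. exact: (unsplitK (inl i)). Qed.
Lemma split_r m n (i : 'I_n) : split (rshift m i) = inr i.
Proof. exact: (unsplitK (inr i)). Qed.

Lemma bform_expand (R : realFieldType) m (M : 'M[R]_m) v w :
  bform M v w = \sum_i \sum_j (v 0 i * w 0 j) * M i j.
Proof.
have {1}-> := row_sum_delta v; have {1}-> := row_sum_delta w.
rewrite bform_suml; apply: eq_bigr => i _.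
rewrite bform_scalel bform_sumr mulr_sumr; apply: eq_bigr => j _.
by rewrite bform_scaler bform_e mulrA.
Qed.

Section Main.
Variables (R : realFieldType) (n k : nat) (G : 'M[R]_n) (B : 'M[R]_k)
  (h : 'rV[R]_n -> 'rV[R]_n -> 'rV[R]_k).
Hypotheses (hn : (0 < n)%N) (HG : pos_def_sym G) (HB : nondeg_sym B)
  (Hh : sym_bilinear h).

Lemma h_linl a x y z : h (a *: x + y) z = a *: h x z + h y z.
Proof. by case: Hh. Qed.
Lemma h_linr a x y z : h z (a *: x + y) = a *: h z x + h z y.
Proof. by case: Hh => H1 H2; rewrite !(H2 z) H1. Qed.

Lemma h_expand v w :
  h v w = \sum_i \sum_j (v 0 i * w 0 j) *: h (ebase R i) (ebase R j).
Proof.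
rewrite (@expand_vec _ _ _ (fun x => h x w) (fun a x y => h_linl a x y w) v).
apply: eq_bigr => i _.
rewrite (@expand_vec _ _ _ (h (ebase R i)) (fun a x y => h_linr a x y _) w).
by rewrite scaler_sumr; apply: eq_bigr => j _; rewrite scalerA.
Qed.

Definition Mat (eta : 'rV[R]_k) : 'M[R]_n :=
  \matrix_(i, j) bform B (h (ebase R i) (ebase R j)) eta.

Lemma Mat_bform eta v w : bform B (h v w) eta = bform (Mat eta) v w.
Proof.
rewrite [RHS]bform_expand h_expand bform_suml; apply: eq_bigr => i _.
rewrite bform_suml; apply: eq_bigr => j _.
by rewrite bform_scalel mxE.
Qed.

Lemma bform_subl m (M : 'M[R]_m) x x' y :
  bform M (x - x') y = bform M x y - bform M x' y.
Proof. by rewrite bform_addl -scaleN1r bform_scalel mulN1r. Qed.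

Lemma shear_bform eta v w :
  bform B (shear G h v w) eta =
  bform (Mat eta) v w - bform G v w * bform B (mean_curv G h) eta.
Proof. by rewrite /shear bform_subl bform_scalel Mat_bform. Qed.

Lemma mean_bform eta :
  bform B (mean_curv G h) eta =
  n%:R^-1 * \sum_i \sum_j invmx G i j * Mat eta i j.
Proof.
rewrite /mean_curv bform_scalel bform_suml; congr (_ * _).
apply: eq_bigr => i _; rewrite bform_suml; apply: eq_bigr => j _.
by rewrite bform_scalel mxE.
Qed.

Lemma G_unit : G \in unitmx.
Proof.
case: HG => _ Hpos.
rewrite -row_free_unit; apply: contraT => Hnf.
have Hr : (0 < \rank (kermx G))%N.
  rewrite mxrank_ker subn_gt0 ltn_neqAle rank_leq_row andbT.
  by move: Hnf; rewrite /row_free.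
have Hk : kermx G != 0 by rewrite -mxrank_eq0 -lt0n.
have [i Hx] : exists i, row i (kermx G) != 0.
  apply/existsP; apply: contraNT Hk => /existsPn Hall.
  by apply/eqP/row_matrixP => i; rewrite row0; apply/eqP/negPn/Hall.
have := Hpos _ Hx.
by rewrite /bform -row_mul mulmx_ker row0 mul0mx mxE ltxx.
Qed.

Lemma trace_sum : \sum_i \sum_j invmx G i j * G i j = n%:R.
Proof.
case: HG => Hs _.
rewrite -(mxtrace1 R n) -(mulVmx G_unit) /mxtrace.
apply: eq_bigr => i _. rewrite mxE; apply: eq_bigr => j _.
by rewrite -{2}Hs mxE.
Qed.


Lemma umb_shape eta : umbilical G B h eta <-> exists c, Mat eta = c *: G.
Proof.
split=> -[c Hc]; exists c.
  rewrite -(mulmxKV G_unit (Mat eta)).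
  by change ((shape_op G B h eta) *m G = c *: G); rewrite Hc mul_scalar_mx.
by change (Mat eta *m invmx G = c%:M); rewrite Hc -scalemxAl mulmxV ?scalemx1 //; exact: G_unit.
Qed.

Lemma n_neq0 : (n%:R : R) != 0.
Proof. by rewrite pnatr_eq0 -lt0n. Qed.

Lemma umb_fwd eta : umbilical G B h eta ->
  forall v w, bform B (shear G h v w) eta = 0.
Proof.
case/umb_shape => c Hc v w.
rewrite shear_bform mean_bform Hc bform_scaleM.
have -> : \sum_i \sum_j invmx G i j * (c *: G) i j =
          c * \sum_i \sum_j invmx G i j * G i j.
  rewrite mulr_sumr; apply: eq_bigr => i _; rewrite mulr_sumr.
  by apply: eq_bigr => j _; rewrite mxE mulrCA.
by rewrite trace_sum (mulrC c (n%:R)) (mulrA n%:R^-1) mulVf ?n_neq0 // mul1r mulrC subrr.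
Qed.

Lemma shear_in v w : in_shear_space G h (shear G h v w).
Proof.
exists 1%N, (fun _ => 1), (fun _ => v), (fun _ => w).
by rewrite big_ord1 scale1r.
Qed.

Lemma Bsym x y : bform B x y = bform B y x.
Proof. by case: HB => Hs _; apply: bform_sym. Qed.

Lemma claim1 eta : umbilical G B h eta <->
  (forall xi, in_shear_space G h xi -> bform B eta xi = 0).
Proof.
split.
  move=> /umb_fwd Hu xi [m [c [v [w ->]]]].
  rewrite Bsym bform_suml big1 // => l _.
  by rewrite bform_scalel Hu mulr0.
move=> H; apply/umb_shape; exists (bform B (mean_curv G h) eta).
apply/matrixP => i j; rewrite !mxE.
have := H _ (shear_in (ebase R i) (ebase R j)).
rewrite Bsym shear_bform !bform_e mxE => /eqP; rewrite subr_eq0 => /eqP ->.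
by rewrite mulrC.
Qed.

Lemma shear_linl a x y z :
  shear G h (a *: x + y) z = a *: shear G h x z + shear G h y z.
Proof.
rewrite /shear h_linl bform_addl bform_scalel scalerDl -scalerA scalerBr.
by rewrite opprD addrACA.
Qed.

Lemma shear_sym x y : shear G h x y = shear G h y x.
Proof.
case: Hh => _ H2; case: HG => Hs _.
by rewrite /shear H2 (bform_sym _ _ Hs).
Qed.

Lemma shear_linr a x y z :
  shear G h z (a *: x + y) = a *: shear G h z x + shear G h z y.
Proof. by rewrite !(shear_sym z) shear_linl. Qed.

Lemma shear_expand v w :
  shear G h v w = \sum_i \sum_j (v 0 i * w 0 j) *: shear G h (ebase R i) (ebase R j).
Proof.
rewrite (@expand_vec _ _ _ (fun x => shear G h x w) (fun a x y => shear_linl a x y w) v).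
apply: eq_bigr => i _.
rewrite (@expand_vec _ _ _ (shear G h (ebase R i)) (fun a x y => shear_linr a x y _) w).
by rewrite scaler_sumr; apply: eq_bigr => j _; rewrite scalerA.
Qed.

Definition S0 : 'M[R]_k :=
  (\sum_(i < n) \sum_(j < n) <<shear G h (ebase R i) (ebase R j)>>)%MS.

Lemma shear_sub v w : (shear G h v w <= S0)%MS.
Proof.
rewrite shear_expand; apply: summx_sub => i _; apply: summx_sub => j _.
apply: scalemx_sub; apply: (sumsmx_sup i) => //; apply: (sumsmx_sup j) => //.
by rewrite genmxE.
Qed.

Lemma in_shear_sub xi : in_shear_space G h xi -> (xi <= S0)%MS.
Proof.
move=> [m [c [v [w ->]]]]; apply: summx_sub => l _.
by apply: scalemx_sub; apply: shear_sub.
Qed.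

Lemma shear0 : in_shear_space G h 0.
Proof.
exists 0%N, (fun _ => 0), (fun _ => 0), (fun _ => 0).
by rewrite big_ord0.
Qed.

Lemma shearD x y : in_shear_space G h x -> in_shear_space G h y ->
  in_shear_space G h (x + y).
Proof.
move=> [m1 [c1 [v1 [w1 ->]]]] [m2 [c2 [v2 [w2 ->]]]].
exists (m1 + m2)%N,
  (fun i => match split i with inl a => c1 a | inr b => c2 b end),
  (fun i => match split i with inl a => v1 a | inr b => v2 b end),
  (fun i => match split i with inl a => w1 a | inr b => w2 b end).
rewrite big_split_ord /=; congr (_ + _); apply: eq_bigr => i _.
  by rewrite split_l.
by rewrite split_r.
Qed.

Lemma sumsmx_ind (P : 'rV[R]_k -> Prop) (I : finType) (A : I -> 'M[R]_k) :
  P 0 -> (forall x y, P x -> P y -> P (x + y)) ->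
  (forall i u, (u <= A i)%MS -> P u) ->
  forall u, (u <= \sum_i A i)%MS -> P u.
Proof.
move=> P0 PD PA u /sub_sumsmxP [u_ ->].
apply: (big_ind P) => // i _; apply: (PA i); exact: submxMl.
Qed.

Lemma sub_in_shear xi : (xi <= S0)%MS -> in_shear_space G h xi.
Proof.
apply: (sumsmx_ind shear0 shearD) => i u.
apply: (sumsmx_ind shear0 shearD) => j u'.
rewrite genmxE => /sub_rVP [a ->].
exists 1%N, (fun _ => a), (fun _ => ebase R i), (fun _ => ebase R j).
by rewrite big_ord1.
Qed.

Lemma ker_orth x (S : 'M[R]_k) :
  (x <= kermx (B *m S^T))%MS <-> forall y, (y <= S)%MS -> bform B x y = 0.
Proof.
rewrite sub_kermx; split.
  move=> /eqP H y /submxP [D ->].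
  by rewrite /bform trmx_mul !mulmxA -(mulmxA x) H mul0mx mxE.
move=> H; apply/eqP/rowP => j.
have := H _ (row_sub j S).
rewrite /bform rowE trmx_mul trmx_delta !mulmxA -colE mxE => ->.
by rewrite mxE.
Qed.

End Main.

Lemma rep_rank (R : realFieldType) k (U U' : 'M[R]_k) P :
  represents U P -> represents U' P -> \rank U = \rank U'.
Proof.
move=> HU HU'.
have sub : forall (X Y : 'M[R]_k), represents X P -> represents Y P -> (X <= Y)%MS.
  by move=> X Y HX HY; apply/row_subP => i; apply/HY/HX; exact: row_sub.
by apply/eqP; rewrite eqn_leq !mxrankS // sub.
Qed.


Theorem proposition3p1 (R : realFieldType) (n k : nat)
  (G : 'M[R]_n) (B : 'M[R]_k) (h : 'rV[R]_n -> 'rV[R]_n -> 'rV[R]_k) :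
  (0 < n)%N ->
  pos_def_sym G -> nondeg_sym B -> sym_bilinear h ->
  (* U_p = (Im htilde_p)^perp *)
  (forall eta : 'rV[R]_k,
     umbilical G B h eta <->
     (forall xi, in_shear_space G h xi -> bform B eta xi = 0)) /\
  (* both are linear subspaces, and k - dim U_p = dim Im htilde_p *)
  (exists U : 'M[R]_k, represents U (umbilical G B h)) /\
  (exists S : 'M[R]_k, represents S (in_shear_space G h)) /\
  (forall U S : 'M[R]_k,
     represents U (umbilical G B h) -> represents S (in_shear_space G h) ->
     (k - \rank U)%N = \rank S).
Proof.
move=> hn HG HB Hh.
have C1 := claim1 hn HG HB Hh.
have RS : represents (S0 G h) (in_shear_space G h).
  move=> x; split; [exact: sub_in_shear | exact: in_shear_sub].
have RU : represents (kermx (B *m (S0 G h)^T)) (umbilical G B h).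
  move=> x; split.
    by move/ker_orth => H; apply/C1 => xi Hxi; apply: H; apply/RS.
  by move/C1 => H; apply/ker_orth => y Hy; apply: H; apply/RS.
split => //; split; first by exists (kermx (B *m (S0 G h)^T)).
split; first by exists (S0 G h).
move=> U S HU HS.
rewrite (rep_rank HU RU) (rep_rank HS RS) mxrank_ker.
have -> : \rank (B *m (S0 G h)^T) = \rank (S0 G h).
  case: HB => Hs Hu.
  rewrite -mxrank_tr trmx_mul trmxK Hs mxrankMfree //.
  by rewrite row_free_unit.
by rewrite subKn // rank_leq_col.
Qed.
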